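(* Let $X=(x_{i,j})$ and $Y=(y_{i,j})$ be arbitrary elements of $FT_n(M)$. (i) $v_M(X)=+\infty$ if and only if $X$ is diagonal. (ii) $\tilde v_M(X)\ge v_M(X)$. (iii) For any $i,j\in\mathbb F_p$, $v_M(iX+jY)\ge\min(v_M(X),v_M(Y))$ and $\tilde v_M(iX+jY)\ge\min(\tilde v_M(X),\tilde v_M(Y))$; in particular adding integer multiples of $I$ does not change $v_M$ or $\tilde v_M$. (iv) $v_M(X^{(p)})=p\,v_M(X)$ and $\tilde v_M(X^{(p)})=p\,\tilde v_M(X)$. (v) $v_M(XY)\ge\min(v_M(X),v_M(Y))$ and $\tilde v_M(XY)\ge\min(\tilde v_M(X),\tilde v_M(Y))$. (vi) If $X$ is nilpotent (i.e. not invertible), then $v_M(XY)\ge\min(v_M(X),\tilde v_M(Y))$ and $v_M(YX)\ge\min(v_M(X),\tilde v_M(Y))$. (vii) If $X$ and $Y$ are both nilpotent, then $v_M(XY)\ge\min(\tilde v_M(X),\tilde v_M(Y))$. (viii) If $X$ is invertible and $v_M(X)>v_M(Y)$, then $v_M(XY)=v_M(YX)=v_M(Y)$. (ix) If $X$ is invertible and $\tilde v_M(X)>\tilde v_M(Y)$, then $\tilde v_M(XY)=\tilde v_M(YX)=\tilde v_M(Y)$. (x) If $X$ is invertible, then $v_M(X^{-1})=v_M(X)$ and $\tilde v_M(X^{-1})=\tilde v_M(X)$. (xi) Let $c$ be an integer, suppose $X$ is nilpotent, and let $\gamma\in M$ with $v_M(\gamma)=c$. Then $v_M(\gamma X)\ge\min\big(\tfrac{c}{n-1},c\big)+v_M(X)$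 and (when $n\ge3$) $\tilde v_M(\gamma X)\ge\min\big(\tfrac{c}{n-2},c\big)+\tilde v_M(X)$.
   Context: Let $p$ be a prime and $M$ a discrete valuation field of characteristic $p$ with valuation $v_M$ (and $v_M(0)=+\infty$). Let $n\ge2$. $NT_n(M)$ denotes the strictly upper triangular $n\times n$ matrices over $M$, and $FT_n(M)=\{cI+X: c\in\mathbb F_p,\ X\in NT_n(M)\}$, a subring of $M_n(M)$ consisting of upper triangular matrices whose diagonal entries are all equal to one element of $\mathbb F_p$. For $X=(x_{i,j})\in FT_n(M)$ define $v_M(X)=\min_{1\le i<j\le n}\frac{v_M(x_{i,j})}{j-i}$ and $\tilde v_M(X)=\min_{1\le i<j\le n,\ (i,j)\ne(1,n)}\frac{v_M(x_{i,j})}{j-i}$ (values in $\mathbb Q\cup\{+\infty\}$). $X^{(p)}$ denotes the matrix obtained by raising every entry of $X$ to the $p$-th power. *)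

(* Defs.v *)
From HB Require Import structures.
From mathcomp Require Import all_boot all_order all_algebra.
From mathcomp Require Import constructive_ereal.
Set Implicit Arguments. Unset Strict Implicit. Unset Printing Implicit Defensive.
Import Order.TTheory GRing.Theory Num.Theory.
Local Open Scope ring_scope.
Local Open Scope ereal_scope.

Definition discrete_valuation (M : fieldType) (v : M -> \bar rat) : Prop :=
  [/\ (forall x, v x = +oo <-> x = 0%R),
      (forall x, x != 0%R -> exists k : int, v x = (k%:~R)%:E),
      (forall k : int, exists x, v x = (k%:~R)%:E),
      (forall x y, v (x * y)%R = v x + v y) &
      (forall x y, Order.min (v x) (v y) <= v (x + y)%R)].

(* FT_n(M): upper triangular matrices whose diagonal entries all equal one
   element of F_p (the image of a natural number c in M, char M = p). *)
Definition is_FT (M : fieldType) (n : nat) (X : 'M[M]_n) : Prop :=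
  (forall i j : 'I_n, (j < i)%N -> X i j = 0%R) /\
  exists c : nat, forall i : 'I_n, X i i = c%:R.

Definition ediv (x : \bar rat) (k : nat) : \bar rat := x * ((k%:R : rat)^-1)%:E.

Definition vmx (M : fieldType) (v : M -> \bar rat) (n : nat) (X : 'M[M]_n)
  : \bar rat :=
  \big[Order.min/+oo]_(i < n) \big[Order.min/+oo]_(j < n | (i < j)%N)
     ediv (v (X i j)) (j - i).

(* tilde v_M(X) = min over i<j, (i,j) <> (1,n) (0-based: (0, n-1)) *)
Definition vtmx (M : fieldType) (v : M -> \bar rat) (n : nat) (X : 'M[M]_n)
  : \bar rat :=
  \big[Order.min/+oo]_(i < n)
     \big[Order.min/+oo]_(j < n | (i < j)%N && ~~ ((val i == 0%N) && (val j == n.-1)))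
     ediv (v (X i j)) (j - i).

Definition frobmx (M : fieldType) (p n : nat) (X : 'M[M]_n) : 'M[M]_n :=
  map_mx (fun x => x ^+ p)%R X.

Definition mx_nilpotent (M : fieldType) (n : nat) (X : 'M[M]_n) : Prop :=
  exists k : nat, iter k (mulmx X) 1%:M = 0%R.

Definition is_diag (M : fieldType) (n : nat) (X : 'M[M]_n) : Prop :=
  forall i j : 'I_n, i != j -> X i j = 0%R.

(* Main.v *)
Require Import Defs.
From HB Require Import structures.
From mathcomp Require Import all_boot all_order all_algebra.
From mathcomp Require Import constructive_ereal zify ring lra.
Import Order.TTheory GRing.Theory Num.Theory.
Local Open Scope ring_scope.
Set Implicit Arguments. Unset Strict Implicit. Unset Printing Implicit Defensive.

Local Open Scope ereal_scope.

Lemma ediv_geP (m x : \bar rat) (k : nat) : (0 < k)%N ->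
  (m <= ediv x k) = (m *+ k <= x).
Proof.
move=> k0; rewrite /ediv -mule_natr.
have c0 : (0 < (k%:R : rat))%R by rewrite ltr0n.
rewrite -(lee_pmul2r (x := (k%:R : rat)%:E)) //.
by rewrite -muleA -EFinM mulVf ?mule1 // gt_eqF.
Qed.

Lemma lee_mulrn (a b : \bar rat) k : a <= b -> a *+ k <= b *+ k.
Proof. by move=> ab; elim: k => // k IH; rewrite !muleS leeD. Qed.

Lemma mulrn_ge0 (a : \bar rat) k : 0 <= a -> 0 <= a *+ k.
Proof. by move=> a0; elim: k => // k IH; rewrite muleS adde_ge0. Qed.

Lemma big2_geP n (P : 'I_n -> 'I_n -> bool) (F : 'I_n -> 'I_n -> \bar rat) m :
  (m <= \big[Order.min/+oo]_(i < n) \big[Order.min/+oo]_(j < n | P i j) F i j)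
  <-> (forall i j, P i j -> m <= F i j).
Proof.
split.
- move=> /bigmin_geP [_ H] i j Pij.
  by have /bigmin_geP [_ H2] := H i isT; apply: H2.
- move=> H; apply/bigmin_geP; split; first exact: leey.
  move=> i _; apply/bigmin_geP; split; first exact: leey.
  by move=> j; apply: H.
Qed.

Section Val.
End Val.

Definition Qt n (i j : 'I_n) : bool := ~~ ((val i == 0%N) && (val j == n.-1)).

Definition geQ (M : fieldType) (v : M -> \bar rat) n (Q : 'I_n -> 'I_n -> bool)
   (m : \bar rat) (X : 'M[M]_n) :=
  forall i j : 'I_n, (i < j)%N -> Q i j -> m *+ (j - i) <= v (X i j).

Lemma vmx_ge (M : fieldType) (v : M -> \bar rat) n (X : 'M[M]_n) m :
  m <= vmx v X <-> geQ v (fun _ _ => true) m X.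
Proof.
rewrite /vmx big2_geP; split.
- by move=> H i j ij _; rewrite -ediv_geP ?subn_gt0 //; apply: H.
- by move=> H i j ij; rewrite ediv_geP ?subn_gt0 //; apply: H.
Qed.

Lemma vtmx_ge (M : fieldType) (v : M -> \bar rat) n (X : 'M[M]_n) m :
  m <= vtmx v X <-> geQ v (@Qt n) m X.
Proof.
rewrite /vtmx big2_geP; split.
- by move=> H i j ij q; rewrite -ediv_geP ?subn_gt0 //; apply: H; rewrite ij.
- by move=> H i j /andP[ij q]; rewrite ediv_geP ?subn_gt0 //; apply: H.
Qed.


Local Open Scope ereal_scope.

Lemma v0 (M : fieldType) (v : M -> \bar rat) (dv : discrete_valuation v) : v 0%R = +oo.
Proof. by case: dv => h _ _ _ _; apply/h. Qed.

Lemma v_fin (M : fieldType) (v : M -> \bar rat) (dv : discrete_valuation v) x :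
  x != 0%R -> exists r : rat, v x = r%:E.
Proof. by case: dv => _ h _ _ _ /h [k ->]; exists k%:~R. Qed.

Lemma v_nNy (M : fieldType) (v : M -> \bar rat) (dv : discrete_valuation v) x :
  v x != -oo.
Proof.
have [->|/(v_fin dv) [r ->]] := eqVneq x 0%R; last by [].
by rewrite (v0 dv).
Qed.

Lemma vM (M : fieldType) (v : M -> \bar rat) (dv : discrete_valuation v) x y :
  v (x * y)%R = v x + v y.
Proof. by case: dv. Qed.

Lemma vD (M : fieldType) (v : M -> \bar rat) (dv : discrete_valuation v) a x y :
  a <= v x -> a <= v y -> a <= v (x + y)%R.
Proof.
case: dv => _ _ _ _ h ax ay; apply: le_trans (h x y).
by rewrite le_min ax ay.
Qed.

Lemma vsum (M : fieldType) (v : M -> \bar rat) (dv : discrete_valuation v)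
  (I : Type) (r : seq I) (P : pred I) (F : I -> M) a :
  (forall i, P i -> a <= v (F i)) -> a <= v (\sum_(i <- r | P i) F i)%R.
Proof.
move=> H; elim/big_ind: _ => //; first by rewrite (v0 dv) leey.
by move=> x y; apply: vD.
Qed.

Lemma v1 (M : fieldType) (v : M -> \bar rat) (dv : discrete_valuation v) :
  v 1%R = 0.
Proof.
have [r e] := v_fin dv (oner_neq0 M).
have := vM dv 1%R 1%R; rewrite mulr1 e -EFinD => /eqP.
rewrite eqe => /eqP h; congr (_%:E).
by apply: (addrI r); rewrite addr0 -h.
Qed.

Lemma vN (M : fieldType) (v : M -> \bar rat) (dv : discrete_valuation v) x :
  v (- x)%R = v x.
Proof.
have n1 : (-1 : M)%R != 0%R by rewrite oppr_eq0 oner_neq0.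
have [r e] := v_fin dv n1.
have h := vM dv (-1)%R (-1)%R; rewrite mulrNN mulr1 (v1 dv) e -EFinD in h.
have r0 : r = 0%R.
  move: h => /eqP; rewrite eqe => /eqP h.
  have : (2 * r = 0 :> rat)%R by rewrite mulr2n mulrDl mul1r h.
  by move/eqP; rewrite mulf_eq0 pnatr_eq0 /= => /eqP.
by rewrite -mulN1r (vM dv) e r0 add0e.
Qed.

Lemma vnat (M : fieldType) (v : M -> \bar rat) (dv : discrete_valuation v) k :
  0 <= v k%:R%R.
Proof.
elim: k => [|k IH]; first by rewrite (v0 dv) leey.
by rewrite -addn1 natrD; apply: vD => //; rewrite (v1 dv).
Qed.

Lemma vX (M : fieldType) (v : M -> \bar rat) (dv : discrete_valuation v) x k :
  v (x ^+ k)%R = v x *+ k.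
Proof.
elim: k => [|k IH]; first by rewrite expr0 (v1 dv).
by rewrite exprS (vM dv) IH muleS.
Qed.

Lemma vnat_unit (p : nat) (M : fieldType) (v : M -> \bar rat) (dv : discrete_valuation v)
  (charM : p \in [pchar M]) c : (c%:R : M)%R != 0%R -> v c%:R%R = 0.
Proof.
move=> c0; have [r e] := v_fin dv c0.
have h : v (c%:R ^+ p)%R = v c%:R%R by rewrite -pFrobenius_autE pFrobenius_aut_nat.
rewrite (vX dv) e -EFin_natmul in h.
move: h => /eqP; rewrite eqe => /eqP h.
have p2 : (1 < p)%N by apply: prime_gt1; apply: (pcharf_prime charM).
have : (r *+ p.-1 = 0)%R.
  by apply: (addrI r); rewrite addr0 -mulrS prednK ?h // ltnW.
by move/eqP; rewrite mulrn_eq0 -subn1 subn_eq0 leqNgt p2 /= => /eqP r0; rewrite e r0.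
Qed.

Lemma vinv (M : fieldType) (v : M -> \bar rat) (dv : discrete_valuation v) x :
  x != 0%R -> v x = 0 -> v x^-1%R = 0.
Proof.
move=> x0 vx; have := vM dv x x^-1; rewrite mulfV // (v1 dv) vx add0e.
by move=> <-.
Qed.


Local Open Scope ereal_scope.

Definition UT (M : fieldType) n (X : 'M[M]_n) :=
  forall i j : 'I_n, (j < i)%N -> X i j = 0%R.
Definition DN (M : fieldType) (v : M -> \bar rat) n (X : 'M[M]_n) :=
  forall i, 0 <= v (X i i).
Definition Qcl n (Q : 'I_n -> 'I_n -> bool) :=
  forall i k j : 'I_n, (i < k)%N -> (k < j)%N -> Q i j -> Q i k && Q k j.

Lemma Qcl_full n : Qcl (fun _ _ : 'I_n => true). Proof. by []. Qed.

Lemma Qcl_t n : Qcl (@Qt n).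
Proof.
move=> i k j ik kj _; rewrite /Qt; apply/andP; split.
- apply/negP => /andP[_ /eqP /= k1]; have := ltn_ord j; lia.
- apply/negP => /andP[/eqP /= k0 _]; lia.
Qed.

Section Prod.
Variables (M : fieldType) (v : M -> \bar rat) (dv : discrete_valuation v) (n : nat).

Lemma mul_entry_ge (X Y : 'M[M]_n) (i j : 'I_n) a :
  (forall k : 'I_n, a <= v (X i k) + v (Y k j)) -> a <= v ((X *m Y) i j).
Proof. by move=> H; rewrite mxE; apply: (vsum dv) => k _; rewrite (vM dv). Qed.

Lemma zero_l x y a : x = 0%R -> a <= v x + v y.
Proof. by move=> ->; rewrite (v0 dv) addye ?(v_nNy dv) ?leey. Qed.

Lemma zero_r x y a : y = 0%R -> a <= v x + v y.
Proof. by move=> ->; rewrite (v0 dv) addey ?(v_nNy dv) ?leey. Qed.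

Lemma diag_l x y a : 0 <= v x -> a <= v y -> a <= v x + v y.
Proof. by move=> *; apply: lee_paddl. Qed.

Lemma diag_r x y a : 0 <= v y -> a <= v x -> a <= v x + v y.
Proof. by move=> *; apply: lee_paddr. Qed.

Lemma enatmulD (a : \bar rat) k l : a *+ (k + l) = a *+ k + a *+ l.
Proof.
elim: k => [|k IH]; first by rewrite add0n mule0n add0e.
by rewrite addSn !muleS IH addeA.
Qed.

Lemma middle (i k j : nat) x y (a : \bar rat) : (i <= k)%N -> (k <= j)%N ->
  a *+ (k - i) <= x -> a *+ (j - k) <= y -> a *+ (j - i) <= x + y.
Proof.
move=> ik kj h1 h2; have -> : (j - i = (k - i) + (j - k))%N by lia.
by rewrite enatmulD leeD.
Qed.

Lemma geQ_mul Q (hQ : Qcl Q) m (X Y : 'M[M]_n) :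
  UT X -> UT Y -> DN v X -> DN v Y -> geQ v Q m X -> geQ v Q m Y ->
  geQ v Q m (X *m Y).
Proof.
move=> uX uY dX dY gX gY i j ij q; apply: mul_entry_ge => k.
case: (ltngtP k i) => [ki|ik|/val_inj ->].
- by apply: zero_l; apply: uX.
- case: (ltngtP k j) => [kj|jk|/val_inj ->].
  + have /andP[q1 q2] := hQ i k j ik kj q.
    apply: (middle (ltnW ik) (ltnW kj)); [exact: gX | exact: gY].
  + by apply: zero_r; apply: uY.
  + by apply: diag_r => //; apply: gX.
- by apply: diag_l => //; apply: gY.
Qed.

Lemma UT_mul (X Y : 'M[M]_n) : UT X -> UT Y -> UT (X *m Y).
Proof.
move=> uX uY i j ji; rewrite mxE big1 // => k _.
case: (ltnP k i) => [ki|ik]; first by rewrite uX ?mul0r.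
by rewrite uY ?mulr0 //; apply: leq_trans ik.
Qed.

Lemma DN_mul (X Y : 'M[M]_n) : UT X -> UT Y -> DN v X -> DN v Y -> DN v (X *m Y).
Proof.
move=> uX uY dX dY i; apply: mul_entry_ge => k.
case: (ltngtP k i) => [ki|ik|/val_inj ->].
- by apply: zero_l; apply: uX.
- by apply: zero_r; apply: uY.
- by apply: adde_ge0.
Qed.

Lemma geQ_le Q m m' (X : 'M[M]_n) : m' <= m -> geQ v Q m X -> geQ v Q m' X.
Proof. by move=> le g i j ij q; apply: le_trans (g i j ij q); apply: lee_mulrn. Qed.

End Prod.


Local Close Scope ereal_scope.

Section Inv.
Variables (M : fieldType) (v : M -> \bar rat) (dv : discrete_valuation v) (n : nat).

Definition SU k (B : 'M[M]_n) := forall i j : 'I_n, (j < i + k)%N -> B i j = 0.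

Lemma SU_pow (A : 'M[M]_n) k : SU 1 A -> SU k (A ^+ k).
Proof.
move=> sA; elim: k => [|k IH] i j.
  rewrite addn0 expr0 -idmxE mxE => ji.
  by case: eqP => // /(congr1 val) /= e; lia.
move=> ji; rewrite exprS -mulmxE mxE big1 // => l _.
case: (ltnP l (i + 1)) => [li|il]; first by rewrite sA ?mul0r.
by rewrite IH ?mulr0 //; lia.
Qed.

Lemma SU_n (A : 'M[M]_n) : SU 1 A -> A ^+ n = 0.
Proof.
move=> sA; apply/matrixP => i j; rewrite mxE (SU_pow (k:=n) sA) //.
have := ltn_ord j; lia.
Qed.

Lemma iter_pow (X : 'M[M]_n) k : iter k (mulmx X) 1%:M = X ^+ k.
Proof. by elim: k => [|k IH] //=; rewrite IH exprS mulmxE. Qed.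

Lemma det_pow (X : 'M[M]_n) k : \det (X ^+ k) = \det X ^+ k.
Proof.
elim: k => [|k IH]; first by rewrite expr0 -idmxE det1.
by rewrite exprS -mulmxE det_mulmx IH exprS.
Qed.

Lemma det_zero : (0 < n)%N -> \det (0 : 'M[M]_n) = 0.
Proof.
move=> n0; rewrite -(scale0r (1%:M : 'M[M]_n)) detZ expr0n.
by rewrite eqn0Ngt n0 mul0r.
Qed.

Lemma nilp_not_unit (X : 'M[M]_n) k : (0 < n)%N -> X ^+ k = 0 -> X \notin unitmx.
Proof.
move=> n0 e; rewrite unitmxE unitfE; apply/negP => d0.
have := det_pow X k; rewrite e det_zero // => /esym /eqP.
by rewrite expf_eq0 (negbTE d0) andbF.
Qed.

Lemma inv_props (X : 'M[M]_n) d : UT X -> (forall i, X i i = d) -> d != 0 ->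
  v d = 0%E ->
  [/\ X \in unitmx, UT (invmx X), (forall i, invmx X i i = d^-1) &
      (forall Q m, Qcl Q -> geQ v Q m X -> geQ v Q m (invmx X))].
Proof.
move=> uX dX d0 vd.
set N := X - d%:M; set A := (- d^-1) *: N.
have sA : SU 1 A.
  move=> i j ji; rewrite !mxE.
  case: (ltngtP j i) => [lt|gt|/val_inj e]; last by rewrite e eqxx dX subrr mulr0.
  - by rewrite uX // (_ : (i == j) = false) ?subr0 ?mulr0 //; apply/negP => /eqP e; rewrite e ltnn in lt.
  - lia.
set S := \sum_(k < n) A ^+ k.
have hS : (1 - A) * S = 1.
  by rewrite -opprB mulNr -subrX1 SU_n // sub0r opprK.
have hX : X = d *: (1 - A).
  rewrite scalerBr /A scalerA mulrN mulfV // scaleN1r opprK -idmxE scalemx1.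
  by rewrite /N addrC subrK.
set Z := d^-1 *: S.
have XZ : X *m Z = 1%:M.
  by rewrite hX /Z -scalemxAl -scalemxAr scalerA mulfV // scale1r mulmxE hS.
have uXu := (mulmx1_unit XZ).1.
have eZ : invmx X = Z by rewrite -[Z](mulKmx uXu) XZ mulmx1.
have vdi : v d^-1 = 0%E by apply: (vinv dv).
have vndi : v (- d^-1) = 0%E by rewrite (vN dv).
have uAk k : UT (A ^+ k) by move=> i j ji; apply: SU_pow => //; lia.
rewrite eZ; split => //.
- move=> i j ji; rewrite /Z /S !mxE summxE big1 ?mulr0 // => k _; exact: uAk.
- move=> i; rewrite /Z /S !mxE summxE.
  have n0 : (0 < n)%N by apply: leq_ltn_trans (ltn_ord i).
  rewrite (bigD1 (Ordinal n0)) //= big1 ?addr0.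
    by rewrite expr0 -idmxE mxE eqxx mulr1.
  move=> k k0; apply: SU_pow => //.
  have kp : (0 < k)%N by rewrite lt0n; move: k0; apply: contra => /eqP e; apply/eqP/val_inj.
  lia.
- move=> Q m hQ gX.
  have gA : geQ v Q m A.
    move=> i j ij q; rewrite !mxE (_ : (i == j) = false); last first.
      by apply/negP => /eqP e; rewrite e ltnn in ij.
    by rewrite subr0 (vM dv) vndi add0e; apply: gX.
  have uA : UT A by move=> i j ji; apply: sA; lia.
  have dA : DN v A by move=> i; rewrite sA ?(v0 dv) ?leey //; lia.
  have hk k : [/\ UT (A ^+ k), DN v (A ^+ k) & geQ v Q m (A ^+ k)].
    elim: k => [|k [u1 d1 g1]].
      rewrite expr0 -idmxE; split.
      + by move=> i j ji; rewrite mxE (_ : (i == j) = false) //; apply/negP => /eqP e; rewrite e ltnn in ji.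
      + by move=> i; rewrite mxE eqxx (v1 dv).
      + move=> i j ij _; rewrite mxE (_ : (i == j) = false) ?(v0 dv) ?leey //.
        by apply/negP => /eqP e; rewrite e ltnn in ij.
    rewrite exprS -mulmxE; split.
    + exact: UT_mul.
    + exact: DN_mul.
    + exact: geQ_mul.
  move=> i j ij q; rewrite /Z /S !mxE summxE (vM dv) vdi add0e.
  apply: (vsum dv) => k _; have [_ _ g] := hk k; exact: g.
Qed.
End Inv.


Local Open Scope ereal_scope.

Lemma min_le_l (a b : \bar rat) : Order.min a b <= a. Proof. by rewrite ge_min lexx. Qed.
Lemma min_le_r (a b : \bar rat) : Order.min a b <= b. Proof. by rewrite ge_min lexx orbT. Qed.

Section Gen.
Variables (M : fieldType) (v : M -> \bar rat) (dv : discrete_valuation v) (n : nat).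
Variables (Q : 'I_n -> 'I_n -> bool) (hQ : Qcl Q) (w : 'M[M]_n -> \bar rat).
Hypothesis hw : forall m X, m <= w X <-> geQ v Q m X.

Lemma w_geQ X : geQ v Q (w X) X. Proof. by apply/hw. Qed.

Lemma G_mul X Y : UT X -> UT Y -> DN v X -> DN v Y ->
  Order.min (w X) (w Y) <= w (X *m Y).
Proof.
move=> *; apply/hw; apply: geQ_mul => //.
- by apply: geQ_le (w_geQ X); apply: min_le_l.
- by apply: geQ_le (w_geQ Y); apply: min_le_r.
Qed.

Lemma G_lin X Y (i j : nat) :
  Order.min (w X) (w Y) <= w (i%:R *: X + j%:R *: Y).
Proof.
apply/hw => a b ab q; rewrite !mxE; apply: (vD dv); rewrite (vM dv);
  apply: lee_paddl; try exact: (vnat dv).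
- by apply: geQ_le (w_geQ X) _ _ ab q; apply: min_le_l.
- by apply: geQ_le (w_geQ Y) _ _ ab q; apply: min_le_r.
Qed.

Lemma G_inv X d : UT X -> (forall i, X i i = d) -> d != 0%R -> v d = 0 ->
  w (invmx X) = w X.
Proof.
move=> uX dX d0 vd.
have [uXu uZ dZ gZ] := inv_props dv uX dX d0 vd.
have d0' : (d^-1)%R != 0%R by rewrite invr_eq0.
have vd' : v (d^-1)%R = 0 by apply: (vinv dv).
have [_ _ _ gZ'] := inv_props dv uZ dZ d0' vd'.
rewrite invmxK in gZ'.
apply/le_anti/andP; split; apply/hw.
- by apply: gZ' => //; apply: w_geQ.
- by apply: gZ => //; apply: w_geQ.
Qed.

Lemma G_viii X Y d : UT X -> (forall i, X i i = d) -> d != 0%R -> v d = 0 ->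
  UT Y -> DN v Y -> w Y < w X -> w (X *m Y) = w Y /\ w (Y *m X) = w Y.
Proof.
move=> uX dX d0 vd uY dY lt.
have [uXu uZ dZ _] := inv_props dv uX dX d0 vd.
have dXn : DN v X by move=> i; rewrite dX vd.
have dZn : DN v (invmx X) by move=> i; rewrite dZ (vinv dv) ?vd.
have eZ := G_inv uX dX d0 vd.
have lo : forall B, Order.min (w X) (w Y) <= w B -> w Y <= w B.
  by move=> B; rewrite (min_r (ltW lt)).
have dXY := DN_mul dv uX uY dXn dY; have dYX := DN_mul dv uY uX dY dXn.
have uXY := UT_mul uX uY; have uYX := UT_mul uY uX.
split; apply/le_anti/andP; split.
- have := @G_mul (invmx X) (X *m Y) uZ uXY dZn dXY.
  rewrite mulKmx // eZ ge_min => /orP[] // h.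
  by move: lt; rewrite ltNge h.
- exact: lo _ (G_mul uX uY dXn dY).
- have := @G_mul (Y *m X) (invmx X) uYX uZ dYX dZn.
  rewrite mulmxK // eZ ge_min => /orP[] // h.
  by move: lt; rewrite ltNge h.
- by apply: lo; rewrite minC; exact: (G_mul uY uX dY dXn).
Qed.
End Gen.


Local Close Scope ereal_scope.

Lemma rat_bound (c : rat) (K k : nat) : (0 < k)%N -> (k <= K)%N ->
  (Order.min (c / K%:R) c) *+ k <= c.
Proof.
move=> k0 kK.
have K0 : (0 < K)%N by apply: leq_trans kK.
have e : c / K%:R * K%:R = c by rewrite divfK // pnatr_eq0 -lt0n.
have q0' : 0 <= c -> 0 <= c / K%:R by move=> hc; rewrite divr_ge0 // ler0n.
have h1 : 1 <= (k%:R : rat) by rewrite ler1n.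
have h2 : (k%:R : rat) <= K%:R by rewrite ler_nat.
move: e q0'; set q := c / K%:R => e q0'.
set m0 := Order.min q c.
have hm1 : m0 <= q by rewrite ge_min lexx.
have hm2 : m0 <= c by rewrite ge_min lexx orbT.
rewrite -mulr_natr.
move: h1 h2 e; set kk := (k%:R : rat); set KK := (K%:R : rat) => h1 h2 e.
case: (lerP 0 c) => hc.
- have q0 := q0' hc.
  apply: (le_trans (y := q * kk)); first by rewrite ler_pM2r //; lra.
  rewrite -[X in _ <= X]e; case: (eqVneq q 0) => [->|qn]; first by rewrite !mul0r.
  by rewrite ler_pM2l //; rewrite lt_neqAle eq_sym qn q0.
- apply: (le_trans (y := c * kk)); first by rewrite ler_pM2r //; lra.
  rewrite -subr_le0 -{2}(mulr1 c) -mulrBr; apply: mulr_le0_ge0; lra.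
Qed.


Local Open Scope ereal_scope.

Lemma min_mulrn (a b : \bar rat) p :
  (Order.min a b) *+ p = Order.min (a *+ p) (b *+ p).
Proof.
case: (leP a b) => h; first by rewrite !min_l // lee_mulrn.
by rewrite !min_r // lee_mulrn // ltW.
Qed.

Lemma big2_mulrn n (P : 'I_n -> 'I_n -> bool) (F : 'I_n -> 'I_n -> \bar rat) p :
  (0 < p)%N ->
  (\big[Order.min/+oo]_(i < n) \big[Order.min/+oo]_(j < n | P i j) F i j) *+ p
  = \big[Order.min/+oo]_(i < n) \big[Order.min/+oo]_(j < n | P i j) (F i j *+ p).
Proof.
case: p => // p _.
have hm : {morph (fun x : \bar rat => x *+ p.+1) : x y / Order.min x y >-> Order.min x y}.
  by move=> x y; rewrite min_mulrn.
rewrite (big_morph _ hm (enatmul_pinfty _)); apply: eq_bigr => i _.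
by rewrite (big_morph _ hm (enatmul_pinfty _)).
Qed.

Lemma ediv_mulrn x k p : ediv (x *+ p) k = (ediv x k) *+ p.
Proof. by rewrite /ediv -!mule_natr muleAC. Qed.

Lemma enatmulDl (a b : \bar rat) k : (a + b) *+ k = a *+ k + b *+ k.
Proof.
elim: k => [|k IH]; first by rewrite !mule0n adde0.
by rewrite !muleS IH addeACA.
Qed.

Lemma Qt_l n (i k j : 'I_n) : (k < j)%N -> Qt i k.
Proof. move=> kj; apply/negP => /andP[_ /eqP /= e]; have := ltn_ord j; lia. Qed.

Lemma Qt_r n (i k j : 'I_n) : (i < k)%N -> Qt k j.
Proof. move=> ik; apply/negP => /andP[/eqP /= e _]; lia. Qed.

Section Gen2.
Variables (M : fieldType) (v : M -> \bar rat) (dv : discrete_valuation v) (n : nat).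
Variables (Q : 'I_n -> 'I_n -> bool) (w : 'M[M]_n -> \bar rat).
Hypothesis hw : forall m X, m <= w X <-> geQ v Q m X.

Lemma G_xi (K : nat) (hK : forall i j : 'I_n, (i < j)%N -> Q i j -> (j - i <= K)%N)
  (c : int) gamma X : v gamma = (c%:~R)%:E ->
  ((Order.min (c%:~R / K%:R) (c%:~R : rat))%:E + w X) <= w (gamma *: X).
Proof.
move=> vg; apply/hw => i j ij q; rewrite mxE (vM dv) vg enatmulDl.
apply: leeD; last by apply: (proj1 (hw _ _) (lexx _)).
rewrite -EFin_natmul lee_fin; apply: rat_bound; [by rewrite subn_gt0 | exact: hK].
Qed.
End Gen2.


Local Close Scope ereal_scope.
Unset Implicit Arguments. Set Strict Implicit.

Theorem lemma3 (p : nat) (M : fieldType) (v : M -> \bar rat) (n : nat)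
  (charM : p \in [pchar M]) (dv : discrete_valuation v) (n_ge2 : (2 <= n)%N)
  (X Y : 'M[M]_n) (FTX : is_FT X) (FTY : is_FT Y) :
  (* (i) *)
  (vmx v X = +oo%E <-> is_diag X) /\
  (* (ii) *)
  (vmx v X <= vtmx v X)%E /\
  (* (iii) *)
  (forall i j : nat,
     (Order.min (vmx v X) (vmx v Y) <= vmx v (i%:R *: X + j%:R *: Y))%E /\
     (Order.min (vtmx v X) (vtmx v Y) <= vtmx v (i%:R *: X + j%:R *: Y))%E) /\
  (forall k : int, vmx v (X + k%:~R%:M) = vmx v X /\
                   vtmx v (X + k%:~R%:M) = vtmx v X) /\
  (* (iv) *)
  (vmx v (frobmx p X) = ((p%:R : rat)%:E * vmx v X)%E /\
   vtmx v (frobmx p X) = ((p%:R : rat)%:E * vtmx v X)%E) /\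
  (* (v) *)
  ((Order.min (vmx v X) (vmx v Y) <= vmx v (X *m Y))%E /\
   (Order.min (vtmx v X) (vtmx v Y) <= vtmx v (X *m Y))%E) /\
  (* (vi) *)
  (mx_nilpotent X ->
     (Order.min (vmx v X) (vtmx v Y) <= vmx v (X *m Y))%E /\
     (Order.min (vmx v X) (vtmx v Y) <= vmx v (Y *m X))%E) /\
  (* (vii) *)
  (mx_nilpotent X -> mx_nilpotent Y ->
     (Order.min (vtmx v X) (vtmx v Y) <= vmx v (X *m Y))%E) /\
  (* (viii) *)
  (X \in unitmx -> (vmx v Y < vmx v X)%E ->
     vmx v (X *m Y) = vmx v Y /\ vmx v (Y *m X) = vmx v Y) /\
  (* (ix) *)
  (X \in unitmx -> (vtmx v Y < vtmx v X)%E ->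
     vtmx v (X *m Y) = vtmx v Y /\ vtmx v (Y *m X) = vtmx v Y) /\
  (* (x) *)
  (X \in unitmx -> vmx v (invmx X) = vmx v X /\ vtmx v (invmx X) = vtmx v X) /\
  (* (xi) *)
  (forall (c : int) (gamma : M), mx_nilpotent X -> v gamma = (c%:~R)%:E ->
     (((Order.min (c%:~R / (n.-1)%:R) (c%:~R : rat))%:E + vmx v X)
        <= vmx v (gamma *: X))%E /\
     ((3 <= n)%N ->
       (((Order.min (c%:~R / (n.-2)%:R) (c%:~R : rat))%:E + vtmx v X)
          <= vtmx v (gamma *: X))%E)).
Proof.
have n0 : (0 < n)%N by apply: ltnW.
case: FTX => uX [cx dX]; case: FTY => uY [cy dY].
have dXn : DN v X by move=> i; rewrite dX; apply: (vnat dv).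
have dYn : DN v Y by move=> i; rewrite dY; apply: (vnat dv).
have hwf : forall (m : \bar rat) (Z : 'M[M]_n), (m <= vmx v Z)%E <-> geQ v (fun _ _ => true) m Z.
  by move=> m Z; apply: vmx_ge.
have hwt : forall (m : \bar rat) (Z : 'M[M]_n), (m <= vtmx v Z)%E <-> geQ v (@Qt n) m Z.
  by move=> m Z; apply: vtmx_ge.
have nil_c : forall (Z : 'M[M]_n) c, UT Z -> (forall i, Z i i = c%:R) ->
    mx_nilpotent Z -> (c%:R : M) = 0.
  move=> Z c uZ dZ [k hk]; apply/eqP; apply/negPn/negP => c0.
  have [uZu _ _ _] := inv_props dv uZ dZ c0 (vnat_unit dv charM c0).
  by move: uZu; apply/negP; apply: (nilp_not_unit (k:=k)) => //; rewrite -iter_pow.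
have unit_c : X \in unitmx -> (cx%:R : M) != 0.
  move=> uXu; apply/negP => /eqP c0; move: uXu; apply/negP.
  apply: (nilp_not_unit (k:=n)) => //; apply: SU_n => i j ji.
  case: (ltngtP j i) => [lt|gt|/val_inj e]; [by apply: uX | lia | by rewrite e dX c0].
have gX := proj1 (hwf _ X) (lexx _); have gY := proj1 (hwf _ Y) (lexx _).
have gtX := proj1 (hwt _ X) (lexx _); have gtY := proj1 (hwt _ Y) (lexx _).
split.
  split.
  - move=> e i j ij.
    have g : geQ v (fun _ _ => true) +oo%E X by apply/hwf; rewrite e.
    case: (ltngtP i j) => [lt|gt|/val_inj e2]; last by rewrite e2 eqxx in ij.
      have := g i j lt isT; rewrite (_ : (j - i)%N = (j - i).-1.+1); last by lia.
      rewrite enatmul_pinfty leye_eq => /eqP h.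
      by case: dv => hv _ _ _ _; apply/hv.
    by apply: uX.
  - move=> hd; apply/eqP; rewrite -leye_eq; apply/hwf => i j ij _.
    rewrite hd ?(v0 dv) ?leey //.
    by apply/eqP => e; rewrite e ltnn in ij.
split.
  by apply/hwt => i j ij _; apply: gX.
split.
  move=> i j; split; [exact (G_lin dv hwf X Y i j) | exact (G_lin dv hwt X Y i j)].
split.
  move=> k; split; rewrite /vmx /vtmx; apply: eq_bigr => i _; apply: eq_bigr => j.
  - move=> ij; rewrite !mxE (_ : (i == j) = false) ?mulr0n ?addr0 //.
    by apply/negP => /eqP e; rewrite e ltnn in ij.
  - move=> /andP[ij _]; rewrite !mxE (_ : (i == j) = false) ?mulr0n ?addr0 //.
    by apply/negP => /eqP e; rewrite e ltnn in ij.
have p0 : (0 < p)%N by apply: prime_gt0; apply: (pcharf_prime charM).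
split.
  split; rewrite mule_natl /vmx /vtmx big2_mulrn //;
    apply: eq_bigr => i _; apply: eq_bigr => j _; by rewrite mxE (vX dv) ediv_mulrn.
split.
  split; [exact (G_mul dv (@Qcl_full n) hwf uX uY dXn dYn)
         | exact (G_mul dv (@Qcl_t n) hwt uX uY dXn dYn)].
have gm : forall (m a : \bar rat) Q (Z : 'M[M]_n), (a <= m)%E -> geQ v Q m Z -> geQ v Q a Z.
  by move=> m a Q Z am g; apply: geQ_le am g.
split.
  move=> nX; have c0 := nil_c X cx uX dX nX.
  have g1 := gm _ _ _ _ (min_le_l (vmx v X) (vtmx v Y)) gX.
  have g2 := gm _ _ _ _ (min_le_r (vmx v X) (vtmx v Y)) gtY.
  split; apply/hwf => i j ij _; apply: (mul_entry_ge dv) => k.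
  - case: (ltngtP k i) => [ki|ik|/val_inj ->].
    + by apply: (zero_l dv); apply: uX.
    + case: (ltngtP k j) => [kj|jk|/val_inj ->].
      * apply: (middle (ltnW ik) (ltnW kj)); first exact: g1.
        by apply: g2 => //; apply: Qt_r ik.
      * by apply: (zero_r dv); apply: uY.
      * by apply: diag_r => //; apply: g1.
    + by apply: (zero_l dv); rewrite dX c0.
  - case: (ltngtP k i) => [ki|ik|/val_inj ->].
    + by apply: (zero_l dv); apply: uY.
    + case: (ltngtP k j) => [kj|jk|/val_inj ->].
      * apply: (middle (ltnW ik) (ltnW kj)); last exact: g1.
        by apply: g2 => //; apply: Qt_l kj.
      * by apply: (zero_r dv); apply: uX.
      * by apply: (zero_r dv); rewrite dX c0.
    + by apply: diag_l => //; apply: g1.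
split.
  move=> nX nY; have c0 := nil_c X cx uX dX nX; have c1 := nil_c Y cy uY dY nY.
  have g1 := gm _ _ _ _ (min_le_l (vtmx v X) (vtmx v Y)) gtX.
  have g2 := gm _ _ _ _ (min_le_r (vtmx v X) (vtmx v Y)) gtY.
  apply/hwf => i j ij _; apply: (mul_entry_ge dv) => k.
  case: (ltngtP k i) => [ki|ik|/val_inj ->].
  + by apply: (zero_l dv); apply: uX.
  + case: (ltngtP k j) => [kj|jk|/val_inj ->].
    * apply: (middle (ltnW ik) (ltnW kj)).
        by apply: g1 => //; apply: Qt_l kj.
      by apply: g2 => //; apply: Qt_r ik.
    * by apply: (zero_r dv); apply: uY.
    * by apply: (zero_r dv); rewrite dY c1.
  + by apply: (zero_l dv); rewrite dX c0.
split.
  move=> uXu lt; have c0 := unit_c uXu.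
  exact (G_viii dv (@Qcl_full n) hwf uX dX c0 (vnat_unit dv charM c0) uY dYn lt).
split.
  move=> uXu lt; have c0 := unit_c uXu.
  exact (G_viii dv (@Qcl_t n) hwt uX dX c0 (vnat_unit dv charM c0) uY dYn lt).
split.
  move=> uXu; have c0 := unit_c uXu; split.
  - exact (G_inv dv (@Qcl_full n) hwf uX dX c0 (vnat_unit dv charM c0)).
  - exact (G_inv dv (@Qcl_t n) hwt uX dX c0 (vnat_unit dv charM c0)).
move=> c gamma _ vg; split.
  apply: (G_xi dv hwf) vg => i j ij _.
  have := ltn_ord j; lia.
move=> n3; apply: (G_xi dv hwt) vg => i j ij.
rewrite /Qt negb_and => /orP[] /eqP /= h; have := ltn_ord j; lia.
Qed.
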